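(* Let $\mathcal F,\mathcal F'$ be $\rho$-flags on $V,V'$ with fixed adapted bases $(v_i),(v'_i)$. Define $F:U(M(\rho,k))\times{\rm Aut}_0(\mathcal C)\times\mathcal T\to{\rm Iso}_{alg}({\rm End}(\mathcal F),{\rm End}(\mathcal F'))$ by $F(A,g,(a_{ij}))=\varphi$, where $\varphi$ is the linear map with $\varphi(E_{ij})=F_{ij}$ for all $i\rho j$, with $F_{ij}$ constructed as follows: $(w_1,\dots,w_n)=(v'_1,\dots,v'_n)A^g$, $F_{ij}(w_j)=a_{ij}w_i$ and $F_{ij}(w_r)=0$ for $r\neq j$. Then $F$ is well defined (each such $\varphi$ is an algebra isomorphism ${\rm End}(\mathcal F)\to{\rm End}(\mathcal F')$) and $F$ is surjective: every algebra isomorphism ${\rm End}(\mathcal F)\to{\rm End}(\mathcal F')$ is of the form $F(A,g,(a_{ij})_{i\rho j})$.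
   Context: Let $k$ be a field, $n\ge 1$, $\rho$ a preorder on $\{1,\dots,n\}$, $M(\rho,k)$ the subalgebra of $M_n(k)$ of matrices with $(i,j)$-entry $0$ whenever $(i,j)\notin\rho$, and $U(M(\rho,k))$ its group of invertible elements. Write $i\sim j$ iff $i\rho j$ and $j\rho i$; $\mathcal C$ is the set of classes, $\hat i$ the class of $i$, ordered by $\hat i\le\hat j$ iff $i\rho j$; $m_\alpha=|\alpha|$. A $\rho$-flag $(V,(V_\alpha)_{\alpha\in\mathcal C})$ is an $n$-dimensional space with subspaces $V_\alpha$ admitting a basis $B=\bigcup_\alpha B_\alpha$ (disjoint) with $|B_\alpha|=m_\alpha$ and $\bigcup_{\beta\le\alpha}B_\beta$ a basis of $V_\alpha$; ${\rm End}(\mathcal F)$ is the algebra of linear $f:V\to V$ with $f(V_\alpha)\subseteq V_\alpha$. An adapted basis $(v_i)_{1\le i\le n}$ of $V$ is one with $\{v_i:\hat i\le\alpha\}$ a basis of $V_\alpha$ for all $\alpha$; for $i\rho j$, $E_{ij}(v_t)=\delta_{jt}v_i$. ${\rm Aut}_0(\mathcal C)$ is the group of poset automorphisms $g$ of $\mathcal C$ with $m_{g(\alpha)}=m_\alpha$ for all $\alpha$. For $g\in{\rm Aut}_0(\mathcal C)$, $\tilde g\in S_n$ is defined by: if $\alpha=\{i_1<\dots<i_r\}$ and $g(\alpha)=\{j_1<\dots<j_r\}$ then $\tilde g(i_s)=j_s$. For $A\in M_n(k)$, $A^g$ is the matrix whose $(i,j)$-entry is the $(i,\tilde g(j))$-entry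 of $A$. $\mathcal T$ is the set of families $(a_{ij})_{i\rho j}$ in $k^*$ with $a_{ij}a_{jr}=a_{ir}$ whenever $i\rho j$, $j\rho r$. $(w_1,\dots,w_n)=(v'_1,\dots,v'_n)M$ means $w_j=\sum_i M_{ij}v'_i$. *)

(* Defs.v *)
From HB Require Import structures.
From mathcomp Require Import all_boot all_order all_algebra all_fingroup.
Set Implicit Arguments. Unset Strict Implicit. Unset Printing Implicit Defensive.
Import GRing.Theory.
Local Open Scope ring_scope.

Section Defs.
Variable n : nat.
Implicit Types (rho : rel 'I_n).

Definition preorder_rel rho := reflexive rho /\ transitive rho.

Definition cls rho (i : 'I_n) : {set 'I_n} := [set j | rho i j && rho j i].

Definition classes rho : {set {set 'I_n}} := [set cls rho i | i : 'I_n].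

Definition cle rho (a b : {set 'I_n}) : bool :=
  [exists i in a, exists j in b, rho i j].

(* Aut_0(C): poset automorphisms of C preserving the class sizes.
   (g is a function on sets of indices; only its restriction to C matters.) *)
Definition Aut0 rho (g : {set 'I_n} -> {set 'I_n}) : Prop :=
  [/\ {in classes rho, forall a, g a \in classes rho},
      {in classes rho &, injective g},
      {in classes rho &, forall a b, cle rho (g a) (g b) = cle rho a b}
    & {in classes rho, forall a, #|g a| = #|a|}].

(* tilde g : if alpha = {i_1 < ... < i_r}, g alpha = {j_1 < ... < j_r},
   then tilde g (i_s) = j_s (enum of a set of ordinals is increasing). *)
Definition gtilde rho (g : {set 'I_n} -> {set 'I_n}) (i : 'I_n) : 'I_n :=
  nth i (enum (g (cls rho i))) (index i (enum (cls rho i))).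

Definition mx_twist (k : fieldType) rho g (A : 'M[k]_n) : 'M[k]_n :=
  \matrix_(i, j) A i (gtilde rho g j).

Definition inMrho (k : fieldType) rho (A : 'M[k]_n) : bool :=
  [forall i, forall j, ~~ rho i j ==> (A i j == 0)].

Definition unitMrho (k : fieldType) rho (A : 'M[k]_n) : Prop :=
  [/\ inMrho rho A, A \in unitmx & inMrho rho (invmx A)].

Definition Tfam (k : fieldType) rho (a : 'I_n -> 'I_n -> k) : Prop :=
  (forall i j, rho i j -> a i j != 0) /\
  (forall i j r, rho i j -> rho j r -> a i j * a j r = a i r).

Section Flags.
Variables (k : fieldType) (V : vectType k).

(* (V, (V_alpha)_alpha) is a rho-flag and v is an adapted basis of it:
   v is a basis of V and, for each class alpha, {v_t : hat t <= alpha}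
   is a basis of V_alpha.  Vs is indexed by classes alpha in C. *)
Definition adapted_basis rho (Vs : {set 'I_n} -> {vspace V})
    (v : n.-tuple V) : Prop :=
  basis_of fullv v /\
  {in classes rho, forall a,
     basis_of (Vs a) [seq tnth v t | t <- enum 'I_n & cle rho (cls rho t) a]}.

Definition EndF rho (Vs : {set 'I_n} -> {vspace V}) : pred 'End(V) :=
  fun f => [forall a in classes rho, (f @: Vs a <= Vs a)%VS].

Definition Eij (v : n.-tuple V) (i j : 'I_n) : 'End(V) :=
  linfun (fun x => coord v j x *: tnth v i).

Definition mxbasis (v : n.-tuple V) (M : 'M[k]_n) : n.-tuple V :=
  [tuple \sum_(i < n) M i j *: tnth v i | j < n].

End Flags.

Definition alg_iso (k : fieldType) (V V' : vectType k)
    (EF : pred 'End(V)) (EF' : pred 'End(V')) (phi : 'End(V) -> 'End(V')) :=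
  [/\ {in EF, forall f, phi f \in EF'},
      (forall c : k, {in EF &, forall f g, phi (c *: f + g) = c *: phi f + phi g}),
      {in EF &, forall f g, phi (f \o g)%VF = (phi f \o phi g)%VF},
      phi \1%VF = \1%VF
    & {in EF &, injective phi} /\
      (forall fp, fp \in EF' -> exists2 f, f \in EF & phi f = fp)].

Definition Fij (k : fieldType) (V' : vectType k) rho (v' : n.-tuple V')
    (A : 'M[k]_n) g (a : 'I_n -> 'I_n -> k) (i j : 'I_n) : 'End(V') :=
  let w := mxbasis v' (mx_twist rho g A) in
  linfun (fun x => (a i j * coord w j x) *: tnth w i).

(* F(A,g,a) : the linear map with phi(E_ij) = F_ij for i rho j.
   Every f in End(F) is sum_{i rho j} c_ij E_ij with c_ij = coord_i (f v_j). *)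
Definition Fmap (k : fieldType) (V V' : vectType k) rho (v : n.-tuple V)
    (v' : n.-tuple V') (A : 'M[k]_n) g (a : 'I_n -> 'I_n -> k)
    (f : 'End(V)) : 'End(V') :=
  \sum_(i < n) \sum_(j < n | rho i j) coord v i (f (tnth v j)) *: Fij rho v' A g a i j.

End Defs.

(* Main.v *)
Require Import Defs.
From HB Require Import structures.
From mathcomp Require Import all_boot all_order all_algebra all_fingroup.
Import GRing.Theory.
Local Open Scope ring_scope.
Set Implicit Arguments. Unset Strict Implicit.
Local Notation classes := Defs.classes.

Lemma linfun_apply (k : fieldType) (V W : vectType k) (F : V -> W) (HF : linear F) x :
  linfun F x = F x.
Proof.
pose FF : {linear V -> W} := HB.pack F (GRing.isLinear.Build _ _ _ _ F HF).
exact: (lfunE FF x).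
Qed.

Section Basis.
Variables (k : fieldType) (n : nat) (V : vectType k) (e : n.-tuple V).
Hypothesis He : basis_of fullv e.

Lemma cfree i j : coord e i (tnth e j) = (j == i)%:R.
Proof. by rewrite (tnth_nth 0) coord_free // (basis_free He). Qed.

Lemma cexp x : x = \sum_i coord e i x *: tnth e i.
Proof.
rewrite {1}(coord_basis He (memvf x)); apply: eq_bigr => i _.
by rewrite (tnth_nth 0).
Qed.

Lemma ceqP x y : (forall i, coord e i x = coord e i y) -> x = y.
Proof. by move=> H; rewrite (cexp x) (cexp y); apply: eq_bigr => i _; rewrite H. Qed.

Lemma csum (c : 'I_n -> k) i : coord e i (\sum_j c j *: tnth e j) = c i.
Proof.
rewrite linear_sum (bigD1 i) //= linearZ /= cfree eqxx mulr1 big1 ?addr0 //.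
by move=> j /negPf ji; rewrite linearZ /= cfree ji mulr0.
Qed.

Lemma lfun_eqP (W : vectType k) (f h : 'Hom(V, W)) :
  (forall j, f (tnth e j) = h (tnth e j)) -> f = h.
Proof.
move=> H; apply/lfunP => x; rewrite (cexp x) !linear_sum.
by apply: eq_bigr => j _; rewrite !linearZ /= H.
Qed.

Lemma lfun_ceqP (f h : 'End(V)) :
  (forall i j, coord e i (f (tnth e j)) = coord e i (h (tnth e j))) -> f = h.
Proof. by move=> H; apply: lfun_eqP => j; apply: ceqP => i; apply: H. Qed.

Lemma ccomp (f h : 'End(V)) i m :
  coord e i ((f \o h)%VF (tnth e m)) =
  \sum_l coord e i (f (tnth e l)) * coord e l (h (tnth e m)).
Proof.
rewrite comp_lfunE {1}(cexp (h (tnth e m))) !linear_sum /=.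
by apply: eq_bigr => l _; rewrite !linearZ /= mulrC.
Qed.

Lemma Eij_apply p q x : Eij e p q x = coord e q x *: tnth e p.
Proof.
rewrite /Eij linfun_apply // => c y z.
by rewrite linearP /= scalerDl scalerA.
Qed.

Lemma cEij i p q m : coord e i (Eij e p q (tnth e m)) = ((i == p) && (m == q))%:R.
Proof.
rewrite Eij_apply linearZ /= !cfree eq_sym [p == i]eq_sym.
by case: (i == p); case: (m == q); rewrite ?mulr0 ?mulr1 ?mul0r.
Qed.

Lemma tnth_neq0 j : tnth e j != 0.
Proof.
apply/negP => /eqP H; have := cfree j j; rewrite H linear0 eqxx.
by move/eqP; rewrite eq_sym oner_eq0.
Qed.

End Basis.

Section Cls.
Variables (n : nat) (rho : rel 'I_n).
Hypothesis Hrho : preorder_rel rho.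

Lemma rrefl i : rho i i. Proof. by case: Hrho. Qed.
Lemma rtrans i j l : rho i j -> rho j l -> rho i l.
Proof. by case: Hrho => _ T H1 H2; apply: T H1 H2. Qed.

Lemma in_cls i j : (j \in cls rho i) = rho i j && rho j i.
Proof. by rewrite inE. Qed.

Lemma cls_refl i : i \in cls rho i.
Proof. by rewrite in_cls rrefl. Qed.

Lemma cls_eqP i j : reflect (cls rho i = cls rho j) (rho i j && rho j i).
Proof.
apply: (iffP idP) => [/andP[Hij Hji] | H].
  apply/setP => l; rewrite !in_cls.
  apply/andP/andP => [[H1 H2] | [H1 H2]]; split.
  - exact: rtrans Hji H1.
  - exact: rtrans H2 Hij.
  - exact: rtrans Hij H1.
  - exact: rtrans H2 Hji.
by have := cls_refl j; rewrite -H in_cls andbC.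
Qed.

Lemma mem_cls_eq i j : j \in cls rho i -> cls rho j = cls rho i.
Proof. by rewrite in_cls andbC => /cls_eqP. Qed.

Lemma cls_class i : cls rho i \in classes rho.
Proof. by apply: imset_f. Qed.

Lemma classesP a : a \in classes rho -> exists i, a = cls rho i.
Proof. by case/imsetP => i _ ->; exists i. Qed.

Lemma cleE i j : cle rho (cls rho i) (cls rho j) = rho i j.
Proof.
apply/idP/idP => [|H].
  case/existsP => i' /andP[Hi' /existsP[j' /andP[Hj' H']]].
  move: Hi' Hj'; rewrite !in_cls => /andP[Hii' _] /andP[_ Hj'j].
  exact: rtrans (rtrans Hii' H') Hj'j.
apply/existsP; exists i; rewrite cls_refl /=.
by apply/existsP; exists j; rewrite cls_refl.
Qed.

Lemma cle_trans a b c : a \in classes rho -> b \in classes rho -> c \in classes rho ->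
  cle rho a b -> cle rho b c -> cle rho a c.
Proof.
move=> /classesP[i ->] /classesP[j ->] /classesP[l ->].
rewrite !cleE; exact: rtrans.
Qed.

Lemma cle_refl a : a \in classes rho -> cle rho a a.
Proof. by move=> /classesP[i ->]; rewrite cleE rrefl. Qed.

Lemma cle_anti a b : a \in classes rho -> b \in classes rho ->
  cle rho a b -> cle rho b a -> a = b.
Proof.
move=> /classesP[i ->] /classesP[j ->]; rewrite !cleE => H1 H2.
by apply/cls_eqP; rewrite H1 H2.
Qed.

Definition inM (k : fieldType) (V : vectType k) (e : n.-tuple V) (f : 'End(V)) :=
  forall i j, ~~ rho i j -> coord e i (f (tnth e j)) = 0.

Section Char.
Variables (k : fieldType) (V : vectType k) (Vs : {set 'I_n} -> {vspace V}).
Variables (e : n.-tuple V) (h : 'I_n -> {set 'I_n}).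
Hypothesis He : basis_of fullv e.
Hypothesis Hh : forall t, h t \in classes rho.
Hypothesis Hhle : forall i j, cle rho (h i) (h j) = rho i j.
Hypothesis HV : forall b, b \in classes rho ->
  Vs b = <<[seq tnth e t | t <- enum 'I_n & cle rho (h t) b]>>%VS.

Lemma span_coord0 (P : pred 'I_n) x i :
  x \in <<[seq tnth e t | t <- enum 'I_n & P t]>>%VS -> ~~ P i -> coord e i x = 0.
Proof.
set X := [seq _ | _ <- _]; move=> Hx HP.
have := coord_span (X := in_tuple X) Hx => ->.
rewrite linear_sum big1 // => l _; rewrite linearZ /=.
have : X`_l \in X by apply: mem_nth.
case/mapP => t; rewrite mem_filter => /andP[Pt _] ->.
rewrite cfree //; case: eqP => [E|_]; last by rewrite mulr0.
by move: Pt HP; rewrite E => ->.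
Qed.

Lemma EndF_inM f : (f \in EndF rho Vs) <-> inM e f.
Proof.
split => [Hf i j Hij | Hf].
  have Hj : tnth e j \in Vs (h j).
    rewrite HV ?Hh //; apply: memv_span; apply: map_f.
    by rewrite mem_filter Hhle rrefl mem_enum.
  have := memv_img f Hj.
  move: Hf; rewrite unfold_in => /forallP/(_ (h j)); rewrite Hh /= => /subvP S /S.
  rewrite HV ?Hh // => H; apply: (span_coord0 H); by rewrite Hhle.
rewrite unfold_in; apply/forallP => a; apply/implyP => Ha.
rewrite HV // limg_span; apply/span_subvP => y /mapP[x /mapP[t Ht ->] ->].
move: Ht; rewrite mem_filter => /andP[Hta _].
rewrite (cexp He (f (tnth e t))); apply: memv_suml => i _.
case: (boolP (rho i t)) => H; last by rewrite Hf // scale0r mem0v.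
apply: memvZ; apply: memv_span; apply: map_f.
rewrite mem_filter mem_enum andbT; apply: (cle_trans (Hh i) (Hh t) Ha) => //.
by rewrite Hhle.
Qed.

End Char.

Lemma adapted_HV (k : fieldType) (V : vectType k) Vs (e : n.-tuple V) :
  adapted_basis rho Vs e -> forall b, b \in classes rho ->
  Vs b = <<[seq tnth e t | t <- enum 'I_n & cle rho (cls rho t) b]>>%VS.
Proof. by case=> _ H b /H /andP[/eqP -> _]. Qed.

End Cls.

Section Gt.
Variables (n : nat) (rho : rel 'I_n) (g : {set 'I_n} -> {set 'I_n}).
Hypothesis Hrho : preorder_rel rho.
Hypothesis Hg : Aut0 rho g.

Lemma g_class i : g (cls rho i) \in classes rho.
Proof. by case: Hg => H _ _ _; apply: H; apply: cls_class. Qed.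

Lemma g_card i : #|g (cls rho i)| = #|cls rho i|.
Proof. by case: Hg => _ _ _ H; apply: H; apply: cls_class. Qed.

Lemma g_cle i j : cle rho (g (cls rho i)) (g (cls rho j)) = rho i j.
Proof. by case: Hg => _ _ H _; rewrite H ?cls_class // cleE. Qed.

Lemma g_inj i j : g (cls rho i) = g (cls rho j) -> cls rho i = cls rho j.
Proof. by case: Hg => _ H _ _; apply: H; apply: cls_class. Qed.

Lemma gt_idx i : (index i (enum (cls rho i)) < size (enum (g (cls rho i))))%N.
Proof. by rewrite -cardE g_card cardE index_mem mem_enum cls_refl. Qed.

Lemma gt_in i : gtilde rho g i \in g (cls rho i).
Proof. by rewrite /gtilde -mem_enum mem_nth // gt_idx. Qed.

Lemma cls_gt i : cls rho (gtilde rho g i) = g (cls rho i).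
Proof.
have [j Ej] := classesP (g_class i).
by have := gt_in i; rewrite Ej => /(mem_cls_eq Hrho).
Qed.

Lemma gt_inj : injective (gtilde rho g).
Proof.
move=> i j E.
have Ec : cls rho i = cls rho j by apply: g_inj; rewrite -!cls_gt E.
have Hj := gt_idx j; have Hi := gt_idx i; rewrite Ec in Hi.
move: E; rewrite /gtilde Ec (set_nth_default i j Hj).
move/eqP; rewrite nth_uniq ?enum_uniq // => /eqP E.
have Hj' : j \in enum (cls rho j) by rewrite mem_enum cls_refl.
have Hi' : i \in enum (cls rho j) by rewrite mem_enum -Ec cls_refl.
by rewrite -(nth_index i Hi') E (nth_index i Hj').
Qed.

End Gt.

Lemma inMrhoP (k : fieldType) n (rho : rel 'I_n) (A : 'M[k]_n) :
  inMrho rho A -> forall i j, A i j != 0 -> rho i j.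
Proof.
move=> /forallP H i j; apply: contraR => Hn.
by have /forallP/(_ j)/implyP/(_ Hn) := H i.
Qed.

Lemma inMrhoI (k : fieldType) n (rho : rel 'I_n) (A : 'M[k]_n) :
  (forall i j, A i j != 0 -> rho i j) -> inMrho rho A.
Proof.
move=> H; apply/forallP => i; apply/forallP => j; apply/implyP => Hn.
by apply: contraR Hn => /H.
Qed.

Lemma sum_delta (k : fieldType) n (V : vectType k) (e : n.-tuple V) t :
  \sum_i ((i == t)%:R : k) *: tnth e i = tnth e t.
Proof.
rewrite (bigD1 t) //= eqxx scale1r big1 ?addr0 // => i /negPf ->.
by rewrite scale0r.
Qed.

Section Dir1.
Variables (k : fieldType) (n : nat) (rho : rel 'I_n) (V V' : vectType k).
Variables (Vs : {set 'I_n} -> {vspace V}) (Vs' : {set 'I_n} -> {vspace V'}).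
Variables (v : n.-tuple V) (v' : n.-tuple V').
Hypothesis Hrho : preorder_rel rho.
Hypothesis Hv : adapted_basis rho Vs v.
Hypothesis Hv' : adapted_basis rho Vs' v'.
Variables (A : 'M[k]_n) (g : {set 'I_n} -> {set 'I_n}) (a : 'I_n -> 'I_n -> k).
Hypothesis HA : unitMrho rho A.
Hypothesis Hg : Aut0 rho g.
Hypothesis Ha : Tfam rho a.

Let C := mx_twist rho g A.
Let w := mxbasis v' C.
Let gt := gtilde rho g.
Let D : 'M[k]_n := \matrix_(j, t) invmx A (gt j) t.

Lemma tnth_w j : tnth w j = \sum_i A i (gt j) *: tnth v' i.
Proof. by rewrite tnth_mktuple; apply: eq_bigr => i _; rewrite mxE. Qed.

Lemma CD : C *m D = 1%:M.
Proof.
case: HA => _ Hu _.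
apply/matrixP => i t; rewrite !mxE.
rewrite (eq_bigr (fun j => A i (gt j) * invmx A (gt j) t)); last by move=> j _; rewrite !mxE.
rewrite -(reindex_inj (gt_inj Hrho Hg) (P := xpredT) (F := fun s => A i s * invmx A s t)).
by have /matrixP/(_ i t) := mulmxV Hu; rewrite !mxE.
Qed.

Lemma v'_w t : tnth v' t = \sum_j D j t *: tnth w j.
Proof.
under eq_bigr => j _ do rewrite tnth_w scaler_sumr.
rewrite exchange_big /=.
rewrite -{1}(sum_delta v' t); apply: eq_bigr => i _.
under eq_bigr => j _ do rewrite scalerA.
rewrite -scaler_suml; congr (_ *: _).
have /matrixP/(_ i t) := CD; rewrite !mxE => <-.
by apply: eq_bigr => j _; rewrite !mxE mulrC.
Qed.

Lemma w_basis : basis_of fullv w.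
Proof.
case: Hv' => Hb _.
rewrite basisEdim size_tuple (size_basis Hb) leqnn andbT.
move/andP: Hb => [/eqP <- _]; apply/span_subvP => x /tnthP[t ->].
rewrite v'_w; apply: memv_suml => j _; apply: memvZ; apply: memv_span.
exact: mem_tnth.
Qed.

Lemma HVw b : b \in classes rho ->
  Vs' b = <<[seq tnth w t | t <- enum 'I_n & cle rho (g (cls rho t)) b]>>%VS.
Proof.
move=> Hb; case: HA => HA1 _ HA2.
rewrite (adapted_HV Hv' Hb); apply/eqP; rewrite eqEsubv; apply/andP; split.
  apply/span_subvP => x /mapP[t]; rewrite mem_filter => /andP[Ht _] ->.
  rewrite v'_w; apply: memv_suml => j _.
  case: (eqVneq (D j t) 0) => [->|Hn]; first by rewrite scale0r mem0v.
  apply: memvZ; apply: memv_span; apply: map_f.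
  rewrite mem_filter mem_enum andbT.
  apply: (cle_trans Hrho (g_class Hg j) (cls_class _ t) Hb) => //.
  move: Hn; rewrite mxE => /(inMrhoP HA2); rewrite -(cleE Hrho); rewrite /gt.
  by rewrite (cls_gt Hrho Hg).
apply/span_subvP => x /mapP[t]; rewrite mem_filter => /andP[Ht _] ->.
rewrite tnth_w; apply: memv_suml => i _.
case: (eqVneq (A i (gt t)) 0) => [->|Hn]; first by rewrite scale0r mem0v.
apply: memvZ; apply: memv_span; apply: map_f.
rewrite mem_filter mem_enum andbT.
apply: (cle_trans Hrho (cls_class _ i) (g_class Hg t) Hb) => //.
move: Hn => /(inMrhoP HA1); rewrite -(cleE Hrho); rewrite /gt.
by rewrite (cls_gt Hrho Hg).
Qed.

Lemma EndF'_inM f : (f \in EndF rho Vs') <-> inM rho w f.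
Proof.
apply: (EndF_inM Hrho w_basis (h := fun t => g (cls rho t))).
- exact: g_class.
- exact: g_cle.
- exact: HVw.
Qed.

Lemma EndF_inMv f : (f \in EndF rho Vs) <-> inM rho v f.
Proof.
apply: (EndF_inM Hrho Hv.1 (h := cls rho)).
- exact: cls_class.
- exact: cleE.
- exact: adapted_HV Hv.
Qed.


Lemma Fij_apply i j x : Fij rho v' A g a i j x = (a i j * coord w j x) *: tnth w i.
Proof.
rewrite /Fij linfun_apply // => c y z.
by rewrite linearP /= mulrDr scalerDl mulrCA scalerA.
Qed.

Lemma a_refl i : a i i = 1.
Proof.
case: Ha => H1 H2; have := H2 i i i (rrefl Hrho i) (rrefl Hrho i).
by move/(congr1 (fun x => x / a i i)); rewrite mulfK ?divff ?H1 ?rrefl.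
Qed.

Lemma cFmap f p m :
  coord w p (Fmap rho v v' A g a f (tnth w m)) =
  if rho p m then coord v p (f (tnth v m)) * a p m else 0.
Proof.
have Hw := w_basis.
rewrite /Fmap sum_lfunE linear_sum.
under eq_bigr => i _ do rewrite sum_lfunE linear_sum.
under eq_bigr => i _ do under eq_bigr => j _ do
  rewrite scale_lfunE Fij_apply !linearZ /= !(cfree Hw).
rewrite (bigD1 p) //= [X in _ + X]big1 ?addr0; last first.
  by move=> i /negPf Hip; rewrite big1 // => j _; rewrite Hip !mulr0.
under eq_bigr => j _ do rewrite eqxx mulr1.
case: ifP => Hpm.
  rewrite (bigD1 m) //= eqxx mulr1 big1 ?addr0 // => j /andP[_ /negPf].
  by rewrite eq_sym => ->; rewrite mulr0 mulr0.
rewrite big1 // => j Hj; case: eqP => [E|_]; last by rewrite !mulr0.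
by move: Hj; rewrite -E Hpm.
Qed.

Lemma Fmap_lin c f h :
  Fmap rho v v' A g a (c *: f + h) =
  c *: Fmap rho v v' A g a f + Fmap rho v v' A g a h.
Proof.
apply: (lfun_ceqP w_basis) => p m.
rewrite add_lfunE scale_lfunE linearD linearZ /= !cFmap add_lfunE scale_lfunE.
rewrite linearD linearZ /=; case: ifP => _; last by rewrite mulr0 addr0.
by rewrite mulrDl mulrA.
Qed.

Lemma Fmap_comp f h : f \in EndF rho Vs -> h \in EndF rho Vs ->
  Fmap rho v v' A g a (f \o h)%VF =
  (Fmap rho v v' A g a f \o Fmap rho v v' A g a h)%VF.
Proof.
move=> /EndF_inMv Hf /EndF_inMv Hh.
apply: (lfun_ceqP w_basis) => p m.
rewrite (ccomp w_basis) cFmap (ccomp Hv.1).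
case: Ha => _ Hm.
case: ifP => Hpm.
  rewrite big_distrl; apply: eq_bigr => l _ /=; rewrite !cFmap.
  case: (boolP (rho p l)) => Hpl; last by rewrite Hf // !mul0r.
  case: (boolP (rho l m)) => Hlm; last by rewrite Hh // !mulr0 mul0r.
  by rewrite -(Hm p l m Hpl Hlm); rewrite !mulrA; congr (_ * _); rewrite -!mulrA; congr (_ * _); rewrite mulrC.
rewrite big1 // => l _; rewrite !cFmap.
case: (boolP (rho p l)) => Hpl; last by rewrite mul0r.
case: (boolP (rho l m)) => Hlm; last by rewrite mulr0.
by rewrite (rtrans Hrho Hpl Hlm) in Hpm.
Qed.

Lemma Fmap_id : Fmap rho v v' A g a \1%VF = \1%VF.
Proof.
apply: (lfun_ceqP w_basis) => p m.
rewrite cFmap !id_lfunE (cfree Hv.1) (cfree w_basis).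
case: (eqVneq m p) => [->|_]; first by rewrite rrefl // a_refl mulr1.
by case: ifP => _; rewrite ?mul0r.
Qed.

Lemma Fmap_E i j : rho i j -> Fmap rho v v' A g a (Eij v i j) = Fij rho v' A g a i j.
Proof.
move=> Hij; apply: (lfun_ceqP w_basis) => p m.
rewrite cFmap Fij_apply linearZ /= (cEij Hv.1) !(cfree w_basis).
case: (eqVneq p i) => [->|Hpi]; last first.
  by rewrite /= !mulr0; case: ifP => _; rewrite ?mul0r.
case: (eqVneq m j) => [->|Hmj]; first by rewrite Hij ?eqxx /= ?mul1r ?mulr1.
by rewrite /= !mulr0 ?mul0r; case: ifP; rewrite ?mul0r.
Qed.

Lemma cEsum (d : 'I_n -> 'I_n -> k) p m :
  coord v p ((\sum_i \sum_j d i j *: Eij v i j) (tnth v m)) = d p m.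
Proof.
rewrite sum_lfunE linear_sum.
under eq_bigr => i _ do rewrite sum_lfunE linear_sum.
under eq_bigr => i _ do under eq_bigr => j _ do
  rewrite scale_lfunE linearZ /= (cEij Hv.1).
rewrite (bigD1 p) //= [X in _ + X]big1 ?addr0; last first.
  by move=> i /negPf Hip; rewrite big1 // => j _; rewrite eq_sym Hip mulr0.
rewrite (bigD1 m) //= [X in _ + X]big1 ?addr0; last first.
  by move=> j /negPf Hjm; rewrite eq_sym Hjm andbF mulr0.
by rewrite !eqxx mulr1.
Qed.

Lemma dir1 :
  (forall i j, rho i j -> Fmap rho v v' A g a (Eij v i j) = Fij rho v' A g a i j)
  /\ alg_iso (EndF rho Vs) (EndF rho Vs') (Fmap rho v v' A g a).
Proof.
split; first exact: Fmap_E.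
case: Ha => Ha0 _.
split.
- move=> f _; apply/EndF'_inM => p m Hpm; by rewrite cFmap (negPf Hpm).
- by move=> c f h _ _; apply: Fmap_lin.
- by move=> f h Hf Hh; apply: Fmap_comp.
- exact: Fmap_id.
split.
  move=> f h /EndF_inMv Hf /EndF_inMv Hh E.
  apply: (lfun_ceqP Hv.1) => p m.
  case: (boolP (rho p m)) => Hpm; last by rewrite Hf ?Hh.
  have := cFmap f p m; rewrite E cFmap Hpm => /esym.
  by move/mulIf; apply; apply: Ha0.
move=> fp /EndF'_inM Hfp.
exists (\sum_i \sum_j (coord w i (fp (tnth w j)) / a i j) *: Eij v i j).
  apply/EndF_inMv => p m Hpm; by rewrite cEsum Hfp // mul0r.
apply: (lfun_ceqP w_basis) => p m; rewrite cFmap cEsum.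
case: ifP => Hpm; first by rewrite mulfVK // Ha0.
by rewrite Hfp // Hpm.
Qed.

End Dir1.

Section Egen.
Variables (k : fieldType) (n : nat) (V : vectType k) (e : n.-tuple V).
Hypothesis He : basis_of fullv e.

Lemma E_comp i j l m : (Eij e i j \o Eij e l m)%VF = ((j == l)%:R : k) *: Eij e i m.
Proof.
apply: (lfun_eqP He) => t.
rewrite comp_lfunE scale_lfunE !Eij_apply linearZ /= scalerA !(cfree He).
by rewrite [l == j]eq_sym mulrC.
Qed.

Lemma E_sandwich (f : 'End(V)) p m :
  (Eij e p p \o f \o Eij e m m)%VF = coord e p (f (tnth e m)) *: Eij e p m.
Proof.
apply: (lfun_eqP He) => t.
rewrite !comp_lfunE scale_lfunE !Eij_apply !linearZ /= !linearZ /= scalerA.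
by rewrite mulrC.
Qed.

Lemma Eij_neq0 i j : Eij e i j != 0.
Proof.
apply/eqP => /(congr1 (fun F : 'End(V) => F (tnth e j))).
rewrite Eij_apply zero_lfunE (cfree He) eqxx scale1r => /eqP.
by rewrite (negPf (tnth_neq0 He i)).
Qed.

End Egen.

Lemma sum_neq0_ex (k : fieldType) (I : finType) (F : I -> k) :
  \sum_i F i != 0 -> exists i, F i != 0.
Proof.
move=> H; apply/existsP; apply: contraR H => /existsPn H.
by apply/eqP; apply: big1 => i _; apply/eqP; move: (H i); rewrite negbK.
Qed.

Lemma sum_le_eq n (f h : 'I_n -> nat) :
  (forall i, f i <= h i)%N -> (\sum_i f i = \sum_i h i)%N -> forall i, f i = h i.
Proof.
move=> Hle Hs i; apply/eqP; rewrite eqn_leq Hle /=; apply: contraT; rewrite -ltnNge => Hlt.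
move: Hs; rewrite (bigD1 i) //= [X in _ = X](bigD1 i) //=.
move=> H2.
have H1 : (\sum_(j < n | j != i) f j <= \sum_(j < n | j != i) h j)%N.
  by apply: leq_sum => j _; apply: Hle.
by have := leq_add Hlt H1; rewrite addSn H2 ltnn.
Qed.

Section Dir2.
Variables (k : fieldType) (n : nat) (rho : rel 'I_n) (V V' : vectType k).
Variables (Vs : {set 'I_n} -> {vspace V}) (Vs' : {set 'I_n} -> {vspace V'}).
Variables (v : n.-tuple V) (v' : n.-tuple V').
Hypothesis Hrho : preorder_rel rho.
Hypothesis Hv : adapted_basis rho Vs v.
Hypothesis Hv' : adapted_basis rho Vs' v'.
Variable phi : 'End(V) -> 'End(V').
Hypothesis Hphi : alg_iso (EndF rho Vs) (EndF rho Vs') phi.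

Let Hvb := Hv.1.
Let Hv'b := Hv'.1.

Lemma EFv f : (f \in EndF rho Vs) <-> inM rho v f.
Proof.
apply: (EndF_inM Hrho Hvb (h := cls rho)).
- exact: cls_class.
- exact: cleE.
- exact: adapted_HV Hv.
Qed.

Lemma EFv' f : (f \in EndF rho Vs') <-> inM rho v' f.
Proof.
apply: (EndF_inM Hrho Hv'b (h := cls rho)).
- exact: cls_class.
- exact: cleE.
- exact: adapted_HV Hv'.
Qed.

Lemma E_in i j : rho i j -> Eij v i j \in EndF rho Vs.
Proof.
move=> Hij; apply/EFv => p m Hpm; rewrite (cEij Hvb).
case: (eqVneq p i) => [E|]; last by rewrite mulr0n.
case: (eqVneq m j) => [E'|]; last by rewrite andbF.
by move: Hpm; rewrite E E' Hij.
Qed.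

Lemma zero_in : (0 : 'End(V)) \in EndF rho Vs.
Proof. by apply/EFv => p m _; rewrite zero_lfunE linear0. Qed.

Lemma scale_in c f : f \in EndF rho Vs -> c *: f \in EndF rho Vs.
Proof.
by move/EFv => H; apply/EFv => p m Hpm; rewrite scale_lfunE linearZ /= H // mulr0.
Qed.

Lemma comp_in f h : f \in EndF rho Vs -> h \in EndF rho Vs -> (f \o h)%VF \in EndF rho Vs.
Proof.
move=> /EFv Hf /EFv Hh; apply/EFv => p m Hpm; rewrite (ccomp Hvb).
apply: big1 => l _.
case: (boolP (rho p l)) => Hpl; last by rewrite Hf // mul0r.
case: (boolP (rho l m)) => Hlm; last by rewrite Hh // mulr0.
by rewrite (rtrans Hrho Hpl Hlm) in Hpm.
Qed.

Lemma phi_lin c f h : f \in EndF rho Vs -> h \in EndF rho Vs ->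
  phi (c *: f + h) = c *: phi f + phi h.
Proof. by case: Hphi => _ H _ _ _; apply: H. Qed.

Lemma phi_comp f h : f \in EndF rho Vs -> h \in EndF rho Vs ->
  phi (f \o h)%VF = (phi f \o phi h)%VF.
Proof. by case: Hphi => _ _ H _ _; apply: H. Qed.

Lemma phi_into f : f \in EndF rho Vs -> phi f \in EndF rho Vs'.
Proof. by case: Hphi => H _ _ _ _; apply: H. Qed.

Lemma phi_onto fp : fp \in EndF rho Vs' -> exists2 f, f \in EndF rho Vs & phi f = fp.
Proof. by case: Hphi => _ _ _ _ [_ H]; apply: H. Qed.

Lemma phi_injf f h : f \in EndF rho Vs -> h \in EndF rho Vs -> phi f = phi h -> f = h.
Proof. by case: Hphi => _ _ _ _ [H _]; apply: H. Qed.

Lemma phi0 : phi 0 = 0.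
Proof.
have := phi_lin 1 zero_in zero_in; rewrite !scale1r !addr0.
by move/(congr1 (fun x => x - phi 0)); rewrite addrK subrr => /esym.
Qed.

Lemma phiZ c f : f \in EndF rho Vs -> phi (c *: f) = c *: phi f.
Proof.
by move=> Hf; have := phi_lin c Hf zero_in; rewrite !addr0 phi0 addr0.
Qed.

Lemma phi_neq0 f : f \in EndF rho Vs -> f != 0 -> phi f != 0.
Proof.
move=> Hf Hn; apply/eqP => E; move/eqP: Hn; apply.
by apply: phi_injf Hf zero_in _; rewrite E phi0.
Qed.

Let e' i := phi (Eij v i i).

Lemma e'_comp i j : (e' i \o e' j)%VF = if i == j then e' i else 0.
Proof.
rewrite /e' -phi_comp ?E_in ?rrefl // (E_comp Hvb).
case: (eqVneq i j) => [->|_]; first by rewrite scale1r.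
by rewrite scale0r phi0.
Qed.

Lemma e'_neq0 i : e' i != 0.
Proof. by apply: phi_neq0; [apply: E_in; apply: rrefl | apply: Eij_neq0]. Qed.

Let u j := e' j (tnth v' (odflt j [pick t | e' j (tnth v' t) != 0])).

Lemma u_neq0 j : u j != 0.
Proof.
rewrite /u; case: pickP => [t //|H] /=.
have := e'_neq0 j; apply: contraR => _; apply/eqP.
apply: (lfun_eqP Hv'b) => t; rewrite zero_lfunE; apply/eqP.
by have := H t; rewrite /= => /negbFE.
Qed.

Lemma e'_u i j : e' i (u j) = if i == j then u j else 0.
Proof.
rewrite /u -comp_lfunE e'_comp.
by case: (eqVneq i j) => [->|_]; rewrite ?zero_lfunE.
Qed.

Let ut : n.-tuple V' := [tuple u j | j < n].

Lemma ut_basis : basis_of fullv ut.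
Proof.
rewrite basisEfree subvf size_tuple (size_basis Hv'b) leqnn !andbT.
apply/freeP => c Hc j.
have := congr1 (e' j) Hc; rewrite linear0 linear_sum.
rewrite (bigD1 j) //= big1 ?addr0; last first.
  move=> i /negPf Hi; rewrite linearZ /= (nth_map i) ?size_enum_ord // nth_ord_enum.
  by rewrite e'_u eq_sym Hi scaler0.
rewrite linearZ /= (nth_map j) ?size_enum_ord // nth_ord_enum e'_u eqxx => /eqP.
by rewrite scaler_eq0 (negPf (u_neq0 j)) orbF => /eqP.
Qed.

Lemma tnth_ut j : tnth ut j = u j.
Proof. exact: tnth_mktuple. Qed.

Lemma e'_E i : e' i = Eij ut i i.
Proof.
apply: (lfun_eqP ut_basis) => j; rewrite Eij_apply (cfree ut_basis) !tnth_ut e'_u.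
by rewrite eq_sym; case: (eqVneq i j) => [->|_]; rewrite ?scale1r ?scale0r.
Qed.

Definition bb p m := coord ut p (phi (Eij v p m) (tnth ut m)).

Lemma phi_E p m : rho p m -> phi (Eij v p m) = bb p m *: Eij ut p m.
Proof.
move=> Hpm.
have -> : Eij v p m = (Eij v p p \o Eij v p m \o Eij v m m)%VF.
  by rewrite (E_comp Hvb) eqxx scale1r (E_comp Hvb) eqxx scale1r.
rewrite !phi_comp ?comp_in ?E_in ?rrefl //.
apply: (lfun_eqP ut_basis) => t.
rewrite !comp_lfunE -!/(e' _) !e'_E scale_lfunE !Eij_apply !linearZ /= scalerA.
by [].
Qed.

Lemma KEY f p m : f \in EndF rho Vs ->
  coord ut p (phi f (tnth ut m)) = if rho p m then coord v p (f (tnth v m)) * bb p m else 0.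
Proof.
move=> Hf.
have -> : coord ut p (phi f (tnth ut m)) =
          coord ut p ((e' p \o phi f \o e' m)%VF (tnth ut m)).
  rewrite !comp_lfunE !e'_E !Eij_apply (cfree ut_basis) eqxx scale1r.
  by rewrite linearZ /= (cfree ut_basis) eqxx mulr1.
rewrite /e' -!phi_comp ?comp_in ?E_in ?rrefl // (E_sandwich Hvb).
case: ifP => Hpm.
  by rewrite phiZ ?E_in // scale_lfunE linearZ.
by rewrite (proj1 (EFv f) Hf p m (negbT Hpm)) scale0r phi0 zero_lfunE linear0.
Qed.

Lemma bb_neq0 p m : rho p m -> bb p m != 0.
Proof.
move=> Hpm; apply/eqP => E.
have := phi_neq0 (E_in Hpm) (Eij_neq0 Hvb p m).
by rewrite phi_E // E scale0r eqxx.
Qed.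

Lemma bb_mul i j r : rho i j -> rho j r -> bb i j * bb j r = bb i r.
Proof.
move=> Hij Hjr.
rewrite [bb i r]/bb.
have -> : Eij v i r = (Eij v i j \o Eij v j r)%VF by rewrite (E_comp Hvb) eqxx scale1r.
rewrite phi_comp ?E_in //.
rewrite comp_lfunE !phi_E // !scale_lfunE !Eij_apply (cfree ut_basis) eqxx.
by rewrite scale1r !linearZ /= !(cfree ut_basis) !eqxx !mulr1.
Qed.

Lemma inM_ut f : f \in EndF rho Vs' -> inM rho ut f.
Proof.
move=> /phi_onto[f0 Hf0 <-] p m Hpm; by rewrite KEY // (negPf Hpm).
Qed.

Lemma Eu_in p m : rho p m -> Eij ut p m \in EndF rho Vs'.
Proof.
move=> Hpm; have -> : Eij ut p m = phi ((bb p m)^-1 *: Eij v p m).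
  by rewrite phiZ ?E_in // phi_E // scalerA mulVf ?scale1r // bb_neq0.
by apply: phi_into; apply: scale_in; apply: E_in.
Qed.


Lemma E'_in s t : rho s t -> Eij v' s t \in EndF rho Vs'.
Proof.
move=> Hst; apply/EFv' => p m Hpm; rewrite (cEij Hv'b).
case: (eqVneq p s) => [E|]; last by rewrite mulr0n.
case: (eqVneq m t) => [E'|]; last by rewrite andbF.
by move: Hpm; rewrite E E' Hst.
Qed.

Definition PP t j := coord v' t (tnth ut j).
Definition QQ j t := coord ut j (tnth v' t).

Lemma star2 i j s t : rho i j -> QQ j t != 0 -> PP s i != 0 -> rho s t.
Proof.
move=> Hij Hq Hp; apply: contraR (mulf_neq0 Hq Hp) => Hst; apply/eqP.
by have := proj1 (EFv' _) (Eu_in Hij) s t Hst; rewrite Eij_apply linearZ.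
Qed.

Lemma star3 i j s t : rho s t -> PP t j != 0 -> QQ i s != 0 -> rho i j.
Proof.
move=> Hst Hp Hq; apply: contraR (mulf_neq0 Hp Hq) => Hij; apply/eqP.
by have := inM_ut (E'_in Hst) Hij; rewrite Eij_apply linearZ.
Qed.

Lemma sum1 j : \sum_t PP t j * QQ j t = 1.
Proof.
have := cfree ut_basis j j; rewrite eqxx mulr1n => <-.
rewrite [in RHS](cexp Hv'b (tnth ut j)) linear_sum; apply: eq_bigr => t _.
by rewrite linearZ.
Qed.

Definition pi j := odflt j [pick t | (PP t j != 0) && (QQ j t != 0)].

Lemma Hpi j : (PP (pi j) j != 0) && (QQ j (pi j) != 0).
Proof.
rewrite /pi; case: pickP => [t //|H] /=.
have [t Ht] : exists t, PP t j * QQ j t != 0.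
  by apply: sum_neq0_ex; rewrite sum1 oner_eq0.
by move: (H t) Ht; rewrite /= mulf_eq0 negb_or => ->.
Qed.

Lemma HpiP j : PP (pi j) j != 0. Proof. by case/andP: (Hpi j). Qed.
Lemma HpiQ j : QQ j (pi j) != 0. Proof. by case/andP: (Hpi j). Qed.

Lemma R1 s j : PP s j != 0 -> rho s (pi j).
Proof. by move=> H; apply: (star2 (rrefl Hrho j) (HpiQ j) H). Qed.

Lemma R2 i j : rho i j -> rho (pi i) (pi j).
Proof. by move=> H; apply: (star2 H (HpiQ j) (HpiP i)). Qed.

Lemma R3 i j : rho (pi i) (pi j) -> rho i j.
Proof. by move=> H; apply: (star3 H (HpiP j) (HpiQ i)). Qed.

Lemma R4 j t : QQ j t != 0 -> rho (pi j) t.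
Proof. by move=> H; apply: (star2 (rrefl Hrho j) H (HpiP j)). Qed.

Definition gg (a : {set 'I_n}) : {set 'I_n} :=
  if [pick i in a] is Some i then cls rho (pi i) else a.

Lemma gg_cls j : gg (cls rho j) = cls rho (pi j).
Proof.
rewrite /gg; case: pickP => [i Hi | H]; last by have := H j; rewrite (cls_refl Hrho).
move: Hi; rewrite in_cls => /andP[H1 H2].
by apply/(cls_eqP Hrho); rewrite (R2 H1) (R2 H2) ?andbT.
Qed.

Lemma gg_class a : a \in classes rho -> gg a \in classes rho.
Proof. by move=> /classesP[j ->]; rewrite gg_cls cls_class. Qed.

Lemma gg_inj : {in classes rho &, injective gg}.
Proof.
move=> a b /classesP[i ->] /classesP[j ->]; rewrite !gg_cls.
by move/(cls_eqP Hrho)/andP => [H1 H2]; apply/(cls_eqP Hrho); rewrite (R3 H1) (R3 H2).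
Qed.

Lemma gg_cle : {in classes rho &, forall a b, cle rho (gg a) (gg b) = cle rho a b}.
Proof.
move=> a b /classesP[i ->] /classesP[j ->]; rewrite !gg_cls !(cleE Hrho).
by apply/idP/idP; [apply: R3 | apply: R2].
Qed.

Lemma gg_onto : gg @: classes rho = classes rho.
Proof.
apply/eqP; rewrite eqEcard (card_in_imset gg_inj) leqnn andbT.
by apply/subsetP => x /imsetP[a Ha ->]; apply: gg_class.
Qed.

Definition Fc (c : {set 'I_n}) : nat := #|[set d in classes rho | cle rho d c]|.

Lemma Fc_le c d : c \in classes rho -> d \in classes rho -> cle rho c d -> (Fc c <= Fc d)%N.
Proof.
move=> Hc Hd Hcd; apply: subset_leq_card; apply/subsetP => x.
rewrite !inE => /andP[Hx Hxc]; rewrite Hx /=.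
exact: (cle_trans Hrho Hx Hc Hd).
Qed.

Lemma Fc_lt c d : c \in classes rho -> d \in classes rho -> cle rho c d -> c != d ->
  (Fc c < Fc d)%N.
Proof.
move=> Hc Hd Hcd Hne; apply: proper_card; rewrite properEneq; apply/andP; split.
  apply/eqP => /setP/(_ d); rewrite !inE Hd (cle_refl Hrho) //= => Hdc.
  by move/eqP: Hne; apply; apply: (cle_anti Hrho) => //; rewrite Hdc.
apply/subsetP => x; rewrite !inE => /andP[Hx Hxc]; rewrite Hx /=.
exact: (cle_trans Hrho Hx Hc Hd).
Qed.

Lemma Fc_gg c : c \in classes rho -> Fc (gg c) = Fc c.
Proof.
move=> Hc; rewrite /Fc.
have -> : [set d in classes rho | cle rho d (gg c)] =
          gg @: [set d in classes rho | cle rho d c].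
  apply/setP => x; apply/idP/idP.
    rewrite inE => /andP[Hx Hxc].
    move: Hx; rewrite -{1}gg_onto => /imsetP[y Hy Exy].
    apply/imsetP; exists y => //; rewrite inE Hy /= -(gg_cle Hy Hc).
    by rewrite -Exy.
  case/imsetP => y Hy0 ->; move: Hy0; rewrite !inE; case/andP => Hy Hyc.
  by rewrite (gg_class Hy) /= (gg_cle Hy Hc).
rewrite card_in_imset //; move=> x y; rewrite !inE => /andP[Hx _] /andP[Hy _].
exact: gg_inj.
Qed.

Definition Pm : 'M[k]_n := \matrix_(t, j) PP t j.
Definition Qm : 'M[k]_n := \matrix_(j, t) QQ j t.

Lemma PQ : Pm *m Qm = 1%:M.
Proof.
apply/matrixP => t s; rewrite !mxE.
have := cfree Hv'b t s; rewrite eq_sym => <-.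
rewrite [in RHS](cexp ut_basis (tnth v' s)) linear_sum; apply: eq_bigr => j _.
by rewrite !mxE linearZ /= mulrC.
Qed.

Lemma sigma_ex : exists s : 'S_n, forall i, PP i (s i) != 0.
Proof.
have [Hu _] := mulmx1_unit PQ.
move: Hu; rewrite unitmxE unitfE => Hd.
have [s Hs] := sum_neq0_ex Hd.
exists s => i; move: Hs; rewrite mulf_eq0 negb_or => /andP[_ /prodf_neq0 H].
by have := H i isT; rewrite mxE.
Qed.

Lemma gg_card a : a \in classes rho -> #|gg a| = #|a|.
Proof.
have [s Hs] := sigma_ex.
have Hle t : (Fc (cls rho t) <= Fc (cls rho (pi (s t))))%N.
  by apply: Fc_le; rewrite ?cls_class // (cleE Hrho) //; apply: R1.
have Hsum : (\sum_t Fc (cls rho t) = \sum_t Fc (cls rho (pi (s t))))%N.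
  rewrite -(reindex_inj (@perm_inj _ s) (P := xpredT) (F := fun j => Fc (cls rho (pi j)))).
  by apply: eq_bigr => j _; rewrite -gg_cls Fc_gg // cls_class.
have Heq t : cls rho t = cls rho (pi (s t)).
  apply/eqP; apply: contraT => Hne.
  have := sum_le_eq Hle Hsum t; move/eqP; rewrite eqn_leq => /andP[_].
  rewrite leqNgt Fc_lt ?cls_class // (cleE Hrho) //; apply: R1; exact: Hs.
move=> /classesP[j0 ->]; rewrite gg_cls.
have E1 : cls rho (pi j0) = s @^-1: [set j | cls rho (pi j) == cls rho (pi j0)].
  apply/setP => t; rewrite !inE -Heq; apply/andP/eqP => [[H1 H2]|].
    by apply/(cls_eqP Hrho); rewrite H1 H2.
  by move=> E; have := (cls_refl Hrho) t; rewrite E in_cls => /andP[X Y]; rewrite Y X.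
have E2 : [set j | cls rho (pi j) == cls rho (pi j0)] = cls rho j0.
  apply/setP => j; rewrite !inE; apply/eqP/andP => [/(cls_eqP Hrho)/andP[H1 H2]|[H1 H2]].
    by split; apply: R3.
  by apply/(cls_eqP Hrho); rewrite (R2 H1) (R2 H2).
by rewrite E1 card_preimset ?E2 //; apply: perm_inj.
Qed.

Lemma gg_Aut0 : Aut0 rho gg.
Proof.
split.
- exact: gg_class.
- exact: gg_inj.
- exact: gg_cle.
- exact: gg_card.
Qed.

Let gtp : {perm 'I_n} := perm (gt_inj Hrho gg_Aut0).

Lemma gtpE j : gtp j = gtilde rho gg j.
Proof. exact: permE. Qed.

Definition Am : 'M[k]_n := \matrix_(i, s) PP i ((gtp^-1)%g s).
Definition Bm : 'M[k]_n := \matrix_(s, t) QQ ((gtp^-1)%g s) t.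

Lemma AB : Am *m Bm = 1%:M.
Proof.
rewrite -PQ; apply/matrixP => i t; rewrite !mxE.
rewrite (reindex_inj (@perm_inj _ gtp)) /=.
by apply: eq_bigr => j _; rewrite !mxE permK.
Qed.

Lemma rho_gt j : rho (pi j) (gtp j) && rho (gtp j) (pi j).
Proof.
by have := gt_in Hrho gg_Aut0 j; rewrite gg_cls in_cls gtpE.
Qed.

Lemma Am_unit : unitMrho rho Am.
Proof.
have [Hu _] := mulmx1_unit AB.
have HinvB : invmx Am = Bm by rewrite -[Bm](mulKmx Hu) AB mulmx1.
split => //; last rewrite HinvB; apply: inMrhoI => i s; rewrite mxE.
  move=> H; have H2 := R1 H; have := rho_gt ((gtp^-1)%g s); rewrite permKV.
  by case/andP => H1 _; apply: rtrans H2 H1.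
move=> H; have H2 := R4 H; have := rho_gt ((gtp^-1)%g i); rewrite permKV.
by case/andP => _ H1; apply: rtrans H1 H2.
Qed.

Lemma twist_ut : mxbasis v' (mx_twist rho gg Am) = ut.
Proof.
apply: eq_from_tnth => j; rewrite tnth_mktuple.
rewrite [in RHS](cexp Hv'b (tnth ut j)); apply: eq_bigr => i _.
by rewrite !mxE -gtpE permK.
Qed.

Lemma bb_T : Tfam rho bb.
Proof. split; [exact: bb_neq0 | exact: bb_mul]. Qed.

Lemma dir2 : exists A : 'M[k]_n, exists g : {set 'I_n} -> {set 'I_n},
      exists a : 'I_n -> 'I_n -> k,
        [/\ unitMrho rho A, Aut0 rho g, Tfam rho a
          & {in EndF rho Vs, forall f, phi f = Fmap rho v v' A g a f}].
Proof.
exists Am, gg, bb; split.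
- exact: Am_unit.
- exact: gg_Aut0.
- exact: bb_T.
move=> f Hf; apply: (lfun_ceqP ut_basis) => p m.
rewrite KEY //.
have := cFmap v Hrho Hv' bb Am_unit gg_Aut0 f p m.
by rewrite twist_ut => ->.
Qed.

End Dir2.

Unset Implicit Arguments.
Set Strict Implicit.

Theorem proposition4p2 (k : fieldType) (n : nat) (rho : rel 'I_n)
    (V V' : vectType k)
    (Vs : {set 'I_n} -> {vspace V}) (Vs' : {set 'I_n} -> {vspace V'})
    (v : n.-tuple V) (v' : n.-tuple V') :
  (0 < n)%N ->
  preorder_rel rho ->
  adapted_basis rho Vs v ->
  adapted_basis rho Vs' v' ->
  (* F is well defined: phi = F(A,g,a) satisfies phi(E_ij) = F_ij and is an
     algebra isomorphism End(F) -> End(F') *)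
  (forall (A : 'M[k]_n) (g : {set 'I_n} -> {set 'I_n}) (a : 'I_n -> 'I_n -> k),
      unitMrho rho A -> Aut0 rho g -> Tfam rho a ->
      (forall i j, rho i j -> Fmap rho v v' A g a (Eij v i j) = Fij rho v' A g a i j)
      /\ alg_iso (EndF rho Vs) (EndF rho Vs') (Fmap rho v v' A g a))
  /\
  (* F is surjective *)
  (forall phi : 'End(V) -> 'End(V'),
      alg_iso (EndF rho Vs) (EndF rho Vs') phi ->
      exists A : 'M[k]_n, exists g : {set 'I_n} -> {set 'I_n},
      exists a : 'I_n -> 'I_n -> k,
        [/\ unitMrho rho A, Aut0 rho g, Tfam rho a
          & {in EndF rho Vs, forall f, phi f = Fmap rho v v' A g a f}]).
Proof.
move=> _ Hrho Hv Hv'; split.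
  by move=> A g a HA Hg Ha; exact: (dir1 Hrho Hv Hv' HA Hg Ha).
by move=> phi Hphi; exact: (dir2 Hrho Hv Hv' Hphi).
Qed.
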